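(* Let $f:\mathbb{R}^n\to\mathbb{R}$ be convex and $\mathcal{G},\mathcal{H}\subseteq\mathbb{R}^n$ closed convex sets; consider $\min_x f(x)$ subject to $x\in\mathcal{G}\cap\mathcal{H}$, with solution $x_\star$ and optimal value $f_\star$. Let $\alpha,\beta>0$ and $y_0\in\mathbb{R}^n$, and run for $t=0,1,\ldots$: $z_t=\mathrm{proj}_{\mathcal{G}}(y_t)$, $u_t\in\partial f(z_t)$, $\gamma_t=\alpha/\sqrt{\beta+\sum_{\tau=0}^{t-1}\|u_\tau\|^2}$, $x_t=\mathrm{proj}_{\mathcal{H}}(2z_t-y_t-\gamma_tu_t)$, $y_{t+1}=y_t-z_t+x_t$. Define $\bar z_t=\frac{1}{t+1}\sum_{\tau=0}^tz_\tau$ and $\tilde z_t=\frac{1}{\sum_{\tau=0}^t\gamma_\tau}\sum_{\tau=0}^t\gamma_\tau z_\tau$. Assume $\|u_t\|\le G_f$ for all $t$, and let $D=\|y_0-x_\star\|$. Then $$f(\tilde z_t)-f_\star\le\tilde{\mathcal{O}}\Big(\frac{2\alpha G_f}{\sqrt{t+1}}\Big(\tfrac{D^2}{4\alpha^2}+1+\tfrac{G_f}{\sqrt\beta}\Big)\Big)\quad\text{and}\quad \mathrm{dist}(\bar z_t,\mathcal{H})\le\tilde{\mathcal{O}}\Big(\frac{2\alpha}{\sqrt{t+1}}\Big(1+\tfrac{G_f}{\sqrt\beta}\Big)\Big).$$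
   Context: $\mathrm{proj}_{\mathcal{G}}(x)=\arg\min_{y\in\mathcal{G}}\|x-y\|$, $\mathrm{dist}(x,\mathcal{H})=\min_{y\in\mathcal{H}}\|x-y\|$. $\tilde{\mathcal{O}}(\cdot)$ denotes $\mathcal{O}(\cdot)$ up to logarithmic factors in $t$. *)

(* Defs.v *)
From HB Require Import structures.
From mathcomp Require Import all_boot all_order all_algebra.
From mathcomp Require Import all_classical all_reals all_analysis.
Set Implicit Arguments. Unset Strict Implicit. Unset Printing Implicit Defensive.
Import Order.TTheory GRing.Theory Num.Theory.
Import numFieldNormedType.Exports.
Local Open Scope classical_set_scope.
Local Open Scope ring_scope.

Section Defs.
Variables (R : realType) (n : nat).
Notation vec := 'rV[R]_n.

Definition dotv (u v : vec) : R := \sum_(i < n) u ord0 i * v ord0 i.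
Definition enorm (u : vec) : R := Num.sqrt (dotv u u).

Definition convex_fun (f : vec -> R) : Prop :=
  forall (x y : vec) (l : R), 0 <= l -> l <= 1 ->
    f (l *: x + (1 - l) *: y) <= l * f x + (1 - l) * f y.

Definition is_proj (S : set vec) (x p : vec) : Prop :=
  S p /\ forall y : vec, S y -> enorm (x - p) <= enorm (x - y).

Definition subgrad (f : vec -> R) (z u : vec) : Prop :=
  forall w : vec, f z + dotv u (w - z) <= f w.

Definition dist (x : vec) (S : set vec) : R :=
  inf [set enorm (x - y) | y in S].

End Defs.

(* Main.v *)
Require Import Defs.
From HB Require Import structures.
From mathcomp Require Import all_boot all_order all_algebra.
From mathcomp Require Import all_classical all_reals all_analysis.
From mathcomp Require Import ring lra.
Import Order.TTheory GRing.Theory Num.Theory.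
Import numFieldNormedType.Exports.
Local Open Scope classical_set_scope.
Local Open Scope ring_scope.

Section Aux.
Variables (R : realType) (n : nat).
Notation vec := 'rV[R]_n.
Implicit Types a b c : vec.

Lemma dotvC a b : dotv a b = dotv b a.
Proof. by apply: eq_bigr => i _; rewrite mulrC. Qed.
Lemma dotvDl a b c : dotv (a + b) c = dotv a c + dotv b c.
Proof. by rewrite /dotv -big_split; apply: eq_bigr => i _; rewrite mxE mulrDl. Qed.
Lemma dotvDr a b c : dotv c (a + b) = dotv c a + dotv c b.
Proof. by rewrite dotvC dotvDl !(dotvC c). Qed.
Lemma dotvZl k a b : dotv (k *: a) b = k * dotv a b.
Proof. by rewrite /dotv mulr_sumr; apply: eq_bigr => i _; rewrite mxE mulrA. Qed.
Lemma dotvZr k a b : dotv a (k *: b) = k * dotv a b.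
Proof. by rewrite dotvC dotvZl dotvC. Qed.
Lemma dotvNl a b : dotv (- a) b = - dotv a b.
Proof. by rewrite -scaleN1r dotvZl mulN1r. Qed.
Lemma dotvNr a b : dotv a (- b) = - dotv a b.
Proof. by rewrite dotvC dotvNl dotvC. Qed.
Lemma dotvBl a b c : dotv (a - b) c = dotv a c - dotv b c.
Proof. by rewrite dotvDl dotvNl. Qed.
Lemma dotvBr a b c : dotv c (a - b) = dotv c a - dotv c b.
Proof. by rewrite dotvDr dotvNr. Qed.
Lemma dotv0l a : dotv 0 a = 0.
Proof. by rewrite -(scale0r 0) dotvZl mul0r. Qed.
Lemma dotvv_ge0 a : 0 <= dotv a a.
Proof. by apply: sumr_ge0 => i _; rewrite -expr2 sqr_ge0. Qed.
Lemma enorm_ge0 a : 0 <= enorm a.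
Proof. exact: sqrtr_ge0. Qed.
Lemma enorm2 a : enorm a ^+ 2 = dotv a a.
Proof. by rewrite sqr_sqrtr // dotvv_ge0. Qed.
Lemma dotvv0 a : dotv a a = 0 -> a = 0.
Proof.
move=> /eqP; rewrite psumr_eq0 => [/allP H|i _]; last by rewrite -expr2 sqr_ge0.
apply/rowP => i; rewrite mxE.
have := H i (mem_index_enum _); rewrite /= mulf_eq0 => /orP[]/eqP //.
Qed.

Lemma CS a b : dotv a b <= enorm a * enorm b.
Proof.
have [b0|bpos] := eqVneq (dotv b b) 0.
  by rewrite (@dotvv0 b b0) dotvC dotv0l mulr_ge0 // enorm_ge0.
have bp : 0 < dotv b b by rewrite lt_neqAle eq_sym bpos dotvv_ge0.
set l := dotv a b / dotv b b.
have H := dotvv_ge0 (a - l *: b).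
rewrite !(dotvBl, dotvBr, dotvZl, dotvZr) (dotvC b a) in H.
have H2 : dotv a b ^+ 2 <= dotv a a * dotv b b.
  have := mulr_ge0 H (ltW bp).
  rewrite /l; set p := dotv a b; set q := dotv b b; set r := dotv a a.
  move=> H3; rewrite -subr_ge0; apply: le_trans H3 _; rewrite le_eqVlt; apply/orP; left; apply/eqP.
  by field; rewrite /q; apply: bpos.
have [ab0|abp] := lerP (dotv a b) 0.
  by apply: (le_trans ab0); rewrite mulr_ge0 // enorm_ge0.
rewrite -[dotv a b](ger0_norm (ltW abp)) -sqrtr_sqr.
by rewrite /enorm -sqrtrM ?dotvv_ge0 // ler_sqrt // mulr_ge0 // dotvv_ge0.
Qed.


Lemma dotvDD a b : dotv (a + b) (a + b) = dotv a a + 2 * dotv a b + dotv b b.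
Proof. rewrite dotvDl !dotvDr (dotvC b a); ring. Qed.
Lemma dotvBB a b : dotv (a - b) (a - b) = dotv a a - 2 * dotv a b + dotv b b.
Proof. rewrite dotvDD !dotvNr !dotvNl opprK; ring. Qed.

Lemma enorm_le2 a b : (enorm a <= enorm b) = (dotv a a <= dotv b b).
Proof. by rewrite /enorm ler_sqrt // dotvv_ge0. Qed.

Lemma enormD a b : enorm (a + b) <= enorm a + enorm b.
Proof.
rewrite -[_ + enorm b]ger0_norm ?addr_ge0 ?enorm_ge0 // -sqrtr_sqr /enorm.
rewrite ler_sqrt ?sqr_ge0 // dotvDD sqrrD !sqr_sqrtr ?dotvv_ge0 //.
have := CS a b; rewrite /enorm => h; lra.
Qed.

Lemma enormZ k a : enorm (k *: a) = `|k| * enorm a.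
Proof.
by rewrite /enorm dotvZl dotvZr mulrA -expr2 sqrtrM ?sqr_ge0 // sqrtr_sqr.
Qed.

Lemma enormN a : enorm (- a) = enorm a.
Proof. by rewrite /enorm dotvNl dotvNr opprK. Qed.

Lemma enormB a b : enorm (a - b) = enorm (b - a).
Proof. by rewrite -enormN opprB. Qed.

Lemma convex_mem (S : set vec) x y l : convex_set S -> 0 <= l -> l <= 1 ->
  S x -> S y -> S (l *: x + (1 - l) *: y).
Proof.
move=> cS l0 l1 Sx Sy.
have := cS x y (Itv01 l0 l1); rewrite !inE => /(_ Sx Sy) //.
Qed.

Lemma proj_vi (S : set vec) v p w : convex_set S -> is_proj S v p -> S w ->
  dotv (v - p) (w - p) <= 0.
Proof.
move=> cS [Sp pmin] Sw.
set d := dotv (v - p) (w - p); set N := dotv (w - p) (w - p).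
have key : forall l, 0 < l -> l <= 1 -> 2 * d <= l * N.
  move=> l l0 l1.
  have Sq := @convex_mem S w p l cS (ltW l0) l1 Sw Sp.
  have := pmin _ Sq; rewrite enorm_le2.
  have -> : v - (l *: w + (1 - l) *: p) = (v - p) - l *: (w - p).
    by rewrite scalerBl scale1r scalerBr; rewrite !opprD !addrA !opprK; congr (_ + _); rewrite addrAC -!addrA; congr (_ + _); rewrite addrC addrA addNr add0r.
  rewrite (dotvBB (v - p) (l *: (w - p))) !dotvZr !dotvZl -/d -/N => h.
  have : l * (2 * d) <= l * (l * N) by lra.
  by rewrite ler_pM2l.
have N0 : 0 <= N by apply: dotvv_ge0.
rewrite leNgt; apply/negP => dpos.
set l := Num.min 1 (d / (N + 1)).
have lp : 0 < l by rewrite lt_min ltr01 divr_gt0 // ltr_pwDr.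
have l1 : l <= 1 by rewrite ge_min lexx.
have := key l lp l1.
have : l <= d / (N + 1) by rewrite ge_min lexx orbT.
rewrite ler_pdivlMr ?ltr_pwDr // => h1 h2.
have : l * N <= l * (N + 1) by rewrite ler_pM2l // lerDl.
nra.
Qed.


Lemma comb_step (W w : R) (V z : vec) : 0 < W -> 0 < w ->
  (W + w)^-1 *: (V + w *: z) =
  (W / (W + w)) *: (W^-1 *: V) + (1 - W / (W + w)) *: z.
Proof.
move=> W0 w0.
have Ww : W + w != 0 by rewrite gt_eqF // addr_gt0.
have -> : 1 - W / (W + w) = w / (W + w).
  by field.
rewrite scalerA mulrAC mulfV ?gt_eqF // mul1r scalerDr scalerA mulrC.
by congr (_ + _); rewrite scalerA mulrC.
Qed.

Lemma convex_sum (S : set vec) (w : nat -> R) (z : nat -> vec) t :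
  convex_set S -> (forall i, 0 < w i) -> (forall i, S (z i)) ->
  S ((\sum_(i < t.+1) w i)^-1 *: \sum_(i < t.+1) (w i *: z i)).
Proof.
move=> cS wp Sz; elim: t => [|t IH].
  by rewrite !big_ord1 scalerA mulVf ?gt_eqF // scale1r.
rewrite big_ord_recr [X in _ *: X]big_ord_recr /=.
have W0 : 0 < \sum_(i < t.+1) w i.
  by rewrite big_ord_recr /= ltr_pwDr // sumr_ge0 // => i _; apply: ltW.
rewrite comb_step //; apply: convex_mem => //.
- by rewrite divr_ge0 // ltW // addr_gt0.
- by rewrite ler_pdivrMr ?addr_gt0 // mul1r lerDl ltW.
Qed.

Lemma jensen (f : vec -> R) (w : nat -> R) (z : nat -> vec) t :
  convex_fun f -> (forall i, 0 < w i) ->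
  f ((\sum_(i < t.+1) w i)^-1 *: \sum_(i < t.+1) (w i *: z i)) <=
  (\sum_(i < t.+1) w i)^-1 * \sum_(i < t.+1) (w i * f (z i)).
Proof.
move=> cf wp; elim: t => [|t IH].
  by rewrite !big_ord1 scalerA mulVf ?gt_eqF // scale1r mulrA mulVf ?gt_eqF // mul1r.
rewrite big_ord_recr [X in _ *: X]big_ord_recr [X in _ <= _ * X]big_ord_recr /=.
set W := \sum_(i < t.+1) w i.
have W0 : 0 < W.
  by rewrite /W big_ord_recr /= ltr_pwDr // sumr_ge0 // => i _; apply: ltW.
rewrite comb_step //.
have l0 : 0 <= W / (W + w t.+1) by rewrite divr_ge0 // ltW // addr_gt0.
have l1 : W / (W + w t.+1) <= 1 by rewrite ler_pdivrMr ?addr_gt0 // mul1r lerDl ltW.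
apply: le_trans (cf _ _ _ l0 l1) _.
have -> : 1 - W / (W + w t.+1) = w t.+1 / (W + w t.+1).
  have Ww : W + w t.+1 != 0 by rewrite gt_eqF // addr_gt0.
  by field.
rewrite -/W in IH.
apply: le_trans (lerD (ler_wpM2l l0 IH) (lexx _)) _.
rewrite le_eqVlt; apply/orP; left; apply/eqP.
field; apply/andP; split; rewrite gt_eqF // addr_gt0 //.
Qed.


Ltac dexp := rewrite ?(dotvDl, dotvDr, dotvNl, dotvNr, dotvZl, dotvZr).

Lemma step_core (Gs Hs : set vec) (y z x w u : vec) (g : R) :
  convex_set Gs -> convex_set Hs -> is_proj Gs y z ->
  is_proj Hs (2%:R *: z - y - g *: u) x -> Gs w -> Hs w ->
  dotv (y - z + x - w) (y - z + x - w) <=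
  dotv (y - w) (y - w) - dotv (z - x) (z - x) - 2 * g * dotv u (x - w).
Proof.
move=> cG cH Pz Px Gw Hw.
have V1 := @proj_vi Gs _ _ _ cG Pz Gw; have V2 := @proj_vi Hs _ _ _ cH Px Hw.
move: V1 V2; dexp => V1 V2.
have := dotvC y z; have := dotvC y x; have := dotvC y w; have := dotvC y u;
have := dotvC z x; have := dotvC z w; have := dotvC z u; have := dotvC x w;
have := dotvC x u; have := dotvC w u.
lra.
Qed.


Lemma enorm_leP a r : 0 <= r -> dotv a a <= r ^+ 2 -> enorm a <= r.
Proof.
move=> r0 h; rewrite -(ger0_norm r0) -sqrtr_sqr /enorm ler_sqrt //.
by rewrite sqr_ge0.
Qed.

Lemma step_f (f : vec -> R) (Gs Hs : set vec) (y z x w u : vec) (g : R) :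
  convex_set Gs -> convex_set Hs -> is_proj Gs y z ->
  is_proj Hs (2%:R *: z - y - g *: u) x -> Gs w -> Hs w ->
  subgrad f z u -> 0 <= g ->
  2 * g * (f z - f w) <=
  dotv (y - w) (y - w) - dotv (y - z + x - w) (y - z + x - w) + g ^+ 2 * dotv u u.
Proof.
move=> cG cH Pz Px Gw Hw sg g0.
have h1 := @step_core Gs Hs _ _ _ _ _ _ cG cH Pz Px Gw Hw.
have h2 := sg w.
have h3 : 2 * g * (f z - f w) <= 2 * g * dotv u (z - w).
  apply: ler_wpM2l; first by rewrite mulr_ge0.
  move: h2; rewrite !dotvBr; lra.
have h4 := dotvv_ge0 (x - z + g *: u).
move: h1 h3 h4; dexp => h1 h3 h4.
have := dotvC y z; have := dotvC y x; have := dotvC y w; have := dotvC y u;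
have := dotvC z x; have := dotvC z w; have := dotvC z u; have := dotvC x w;
have := dotvC x u; have := dotvC w u.
rewrite expr2.
nra.
Qed.

Lemma step_d (Gs Hs : set vec) (y z x w u : vec) (g : R) :
  convex_set Gs -> convex_set Hs -> is_proj Gs y z ->
  is_proj Hs (2%:R *: z - y - g *: u) x -> Gs w -> Hs w -> 0 <= g ->
  enorm (y - z + x - w) <= enorm (y - w) + 2 * g * enorm u.
Proof.
move=> cG cH Pz Px Gw Hw g0.
have h1 := @step_core Gs Hs _ _ _ _ _ _ cG cH Pz Px Gw Hw.
have V1 := @proj_vi Gs _ _ _ cG Pz Gw; have V2 := @proj_vi Hs _ _ _ cH Px Hw.
set v := 2%:R *: z - y - g *: u in V2 Px h1.
have h2 : enorm (x - w) <= enorm (v - w).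
  rewrite enorm_le2.
  have -> : v - w = (v - x) + (x - w) by rewrite addrA subrK.
  rewrite (dotvDD (v - x) (x - w)); have := dotvv_ge0 (v - x).
  have -> : dotv (v - x) (x - w) = - dotv (v - x) (w - x) by rewrite -dotvNr opprB.
  lra.
have h3 : enorm (v - w) <= enorm (2%:R *: z - y - w) + g * enorm u.
  have -> : v - w = (2%:R *: z - y - w) + - (g *: u).
    by rewrite /v addrAC.
  by apply: (le_trans (enormD _ _)); rewrite enormN enormZ ger0_norm.
have h4 : enorm (2%:R *: z - y - w) <= enorm (y - w).
  rewrite enorm_le2; move: V1; dexp => V1.
  have := dotvC y z; have := dotvC y w; have := dotvC z w. lra.
have h5 := CS (- u) (x - w); rewrite enormN dotvNl in h5.
set d := enorm (y - w) in h4 *.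
set e := enorm u in h3 h5 *.
have d0 : 0 <= d by apply: enorm_ge0.
have e0 : 0 <= e by apply: enorm_ge0.
have xw0 : 0 <= enorm (x - w) by apply: enorm_ge0.
apply: enorm_leP; first by rewrite addr_ge0 // !mulr_ge0.
have hd : dotv (y - w) (y - w) = d ^+ 2 by rewrite enorm2.
have h6 := dotvv_ge0 (z - x).
have h7 : - (2 * g * dotv u (x - w)) <= 2 * g * (e * enorm (x - w)).
  rewrite -mulrN; apply: ler_wpM2l; first by rewrite mulr_ge0.
  by [].
have h8 : 2 * g * (e * enorm (x - w)) <= 2 * g * (e * (d + g * e)).
  apply: ler_wpM2l; first by rewrite mulr_ge0.
  apply: ler_wpM2l => //; apply: (le_trans h2); apply: (le_trans h3).
  by rewrite lerD2r.
have h9 : 0 <= g * e * d by rewrite !mulr_ge0.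
rewrite -/v; nra.
Qed.


End Aux.

Section Seq.
Variable R : realType.

Lemma ln_ineq (s s' : R) : 0 < s -> s <= s' -> (s' - s) / s' <= ln s' - ln s.
Proof.
move=> s0 ss.
have s'0 : 0 < s' by apply: lt_le_trans ss.
have h := expR_ge1Dx (ln (s / s')).
rewrite lnK ?posrE ?divr_gt0 // in h.
rewrite ln_div ?posrE // in h.
have -> : (s' - s) / s' = 1 - s / s' by field; rewrite gt_eqF.
lra.
Qed.

Definition Ssum (beta : R) (g : nat -> R) t := beta + \sum_(i < t) g i ^+ 2.

Lemma SsumS (beta : R) (g : nat -> R) t : Ssum beta g t.+1 = Ssum beta g t + g t ^+ 2.
Proof. by rewrite /Ssum big_ord_recr /= addrA. Qed.

Lemma Ssum_ge (beta : R) (g : nat -> R) t : beta <= Ssum beta g t.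
Proof. by rewrite /Ssum lerDl sumr_ge0 // => i _; rewrite sqr_ge0. Qed.

Lemma Ssum_mono (beta : R) (g : nat -> R) s t : (s <= t)%N -> Ssum beta g s <= Ssum beta g t.
Proof.
move=> /subnK <-; elim: (t - s)%N => [|k IH]; first by rewrite add0n.
by rewrite addSn SsumS (le_trans IH) // lerDl sqr_ge0.
Qed.

Lemma Ssum_le (beta G : R) (g : nat -> R) t : (forall i, 0 <= g i <= G) ->
  Ssum beta g t <= beta + t%:R * G ^+ 2.
Proof.
move=> hg; elim: t => [|t IH]; first by rewrite /Ssum big_ord0 mul0r.
rewrite SsumS mulrSr mulrDl mul1r addrA lerD //.
have := hg t => /andP[g0 gG]; rewrite ler_pXn2r // ?nnegrE //.
by apply: le_trans gG.
Qed.

Lemma Lam_bound (beta G : R) (g : nat -> R) t : 0 < beta -> (forall i, 0 <= g i <= G) ->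
  \sum_(i < t) (g i ^+ 2 / Ssum beta g i) <=
  (1 + G ^+ 2 / beta) * (ln (Ssum beta g t) - ln beta).
Proof.
move=> b0 hg; elim: t => [|t IH].
  by rewrite big_ord0 /Ssum big_ord0 addr0 subrr mulr0.
rewrite big_ord_recr /=.
have S0 : 0 < Ssum beta g t by apply: lt_le_trans (Ssum_ge _ _ _).
have S1 : Ssum beta g t <= Ssum beta g t.+1 by rewrite SsumS lerDl sqr_ge0.
have hl := ln_ineq _ _ S0 S1.
have S10 : 0 < Ssum beta g t.+1 by apply: lt_le_trans S1.
rewrite SsumS in hl S10.
have hg2 : g t ^+ 2 <= G ^+ 2.
  have := hg t => /andP[g0 gG]; rewrite ler_pXn2r // ?nnegrE //.
  by apply: le_trans gG.
have hr : g t ^+ 2 / Ssum beta g t <= G ^+ 2 / beta.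
  apply: le_trans (_ : G ^+ 2 / Ssum beta g t <= _).
    by rewrite ler_pM2r // invr_gt0.
  by apply: ler_wpM2l; [rewrite sqr_ge0 | rewrite lef_pV2 ?posrE // Ssum_ge].
have key : g t ^+ 2 / Ssum beta g t =
   (1 + g t ^+ 2 / Ssum beta g t) * ((Ssum beta g t + g t ^+ 2 - Ssum beta g t) / (Ssum beta g t + g t ^+ 2)).
  by field; rewrite !gt_eqF.
rewrite key; set c := 1 + G ^+ 2 / beta.
have lnpos : 0 <= (Ssum beta g t + g t ^+ 2 - Ssum beta g t) / (Ssum beta g t + g t ^+ 2).
  by rewrite addrAC subrr add0r divr_ge0 // ?sqr_ge0 // ltW.
have : (1 + g t ^+ 2 / Ssum beta g t) * ((Ssum beta g t + g t ^+ 2 - Ssum beta g t) / (Ssum beta g t + g t ^+ 2))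
  <= c * (ln (Ssum beta g t + g t ^+ 2) - ln (Ssum beta g t)).
  apply: (le_trans (ler_wpM2r lnpos (_ : _ <= c))); first by rewrite lerD2l.
  by apply: ler_wpM2l => //; rewrite /c addr_ge0 // divr_ge0 ?sqr_ge0 // ltW.
rewrite SsumS -/c in IH *; move=> h.
lra.
Qed.

End Seq.
Arguments Ssum {R}.
Arguments SsumS {R}.
Arguments Ssum_ge {R}.
Arguments Ssum_mono {R}.
Arguments Ssum_le {R}.
Arguments Lam_bound {R}.
Arguments ln_ineq {R}.

Section Asym.
Variable R : realType.

Lemma eventually_log (A B c : R) : 0 <= A -> 0 <= B -> 0 < c ->
  exists T0 : nat, forall t, (T0 <= t)%N ->
    A + B * ln (t.+1%:R : R) <= c * (1 + ln (t.+1%:R : R)) ^+ 2.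
Proof.
move=> A0 B0 c0; set M := (A + B) / c.
exists (Num.trunc (expR M)) => t tT.
have hN : expR M <= t.+1%:R.
  apply: ltW; apply: lt_le_trans (truncnS_gt _) _.
  by rewrite ler_nat ltnS.
have lM : M <= ln (t.+1%:R : R).
  by rewrite -[M]expRK ler_ln ?posrE ?expR_gt0 // (lt_le_trans (expR_gt0 M)).
have l0 : 0 <= ln (t.+1%:R : R) by rewrite ln_ge0 // ler1n.
set l := ln _ in lM l0 *.
have M0 : 0 <= M by rewrite divr_ge0 ?addr_ge0 // ltW.
have hc : A + B = c * M by rewrite /M mulrC divfK ?gt_eqF.
have h1 : A + B * l <= (A + B) * (1 + l) by nra.
have h2 : M * (1 + l) <= (1 + l) * (1 + l) by nra.
rewrite hc in h1; nra.
Qed.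

End Asym.
Arguments eventually_log {R}.

Section Main.
Variables (R : realType) (n : nat) (f : 'rV[R]_n -> R) (Gs Hs : set 'rV[R]_n)
  (xstar : 'rV[R]_n) (alpha beta Gf : R) (y z u x : nat -> 'rV[R]_n).
Hypotheses (cf : convex_fun f) (cG : convex_set Gs) (cH : convex_set Hs)
  (Gx : Gs xstar) (Hx : Hs xstar) (a0 : 0 < alpha) (b0 : 0 < beta).
Let g t := enorm (u t).
Let gam t := alpha / Num.sqrt (Ssum beta g t).
Hypotheses (Pz : forall t, is_proj Gs (y t) (z t))
  (sg : forall t, subgrad f (z t) (u t))
  (Px : forall t, is_proj Hs (2%:R *: z t - y t - gam t *: u t) (x t))
  (rec : forall t, y t.+1 = y t - z t + x t)
  (ub : forall t, enorm (u t) <= Gf).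

Let d t := enorm (y t - xstar).
Let D := d 0.

Lemma g0 t : 0 <= g t. Proof. exact: enorm_ge0. Qed.
Lemma G0 : 0 <= Gf. Proof. exact: le_trans (g0 0) (ub 0). Qed.
Lemma hg t : 0 <= g t <= Gf. Proof. by rewrite g0 ub. Qed.
Lemma Spos t : 0 < Ssum beta g t. Proof. exact: lt_le_trans b0 (Ssum_ge _ _ _). Qed.
Lemma sqS t : 0 < Num.sqrt (Ssum beta g t). Proof. by rewrite sqrtr_gt0 Spos. Qed.
Lemma gpos t : 0 < gam t. Proof. by rewrite divr_gt0 // sqS. Qed.
Lemma gam2 t : gam t ^+ 2 = alpha ^+ 2 / Ssum beta g t.
Proof. by rewrite expr_div_n sqr_sqrtr // ltW // Spos. Qed.

Lemma P1 t : 2 * gam t * (f (z t) - f xstar) <=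
  d t ^+ 2 - d t.+1 ^+ 2 + gam t ^+ 2 * g t ^+ 2.
Proof.
rewrite /d /g !enorm2 rec.
exact: (@step_f R n f Gs Hs _ _ _ _ _ _ cG cH (Pz t) (Px t) Gx Hx (sg t) (ltW (gpos t))).
Qed.

Lemma P2 t : d t.+1 <= d t + 2 * gam t * g t.
Proof.
rewrite /d /g rec.
exact: (@step_d R n Gs Hs _ _ _ _ _ _ cG cH (Pz t) (Px t) Gx Hx (ltW (gpos t))).
Qed.

Lemma Sum1 t : \sum_(i < t) 2 * gam i * (f (z i) - f xstar) <=
  D ^+ 2 - d t ^+ 2 + \sum_(i < t) gam i ^+ 2 * g i ^+ 2.
Proof.
elim: t => [|t IH]; first by rewrite !big_ord0 subrr addr0.
rewrite !big_ord_recr /=; have := P1 t; lra.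
Qed.

Lemma Sum2 t : d t <= D + \sum_(i < t) 2 * gam i * g i.
Proof.
elim: t => [|t IH]; first by rewrite big_ord0 addr0.
rewrite big_ord_recr /=; have := P2 t; lra.
Qed.


Let c2 := 1 + Gf ^+ 2 / beta.
Let Lam t := \sum_(i < t) gam i ^+ 2 * g i ^+ 2.

Lemma c2_ge1 : 1 <= c2.
Proof. by rewrite /c2 lerDl divr_ge0 // ?sqr_ge0 // ltW. Qed.

Lemma Lam_ge0 t : 0 <= Lam t.
Proof. by apply: sumr_ge0 => i _; rewrite mulr_ge0 // sqr_ge0. Qed.

Lemma Lam_le t : Lam t <= alpha ^+ 2 * c2 * (ln (Ssum beta g t) - ln beta).
Proof.
have := ler_wpM2l (sqr_ge0 alpha) (Lam_bound beta Gf g t b0 hg).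
rewrite mulrA => h; apply: le_trans h.
rewrite mulr_sumr le_eqVlt; apply/orP; left; apply/eqP; apply: eq_bigr => i _.
by rewrite gam2; field; rewrite gt_eqF // Spos.
Qed.

Lemma lnS_le t : ln (Ssum beta g t.+1) - ln beta <= ln (t.+1%:R : R) + ln c2.
Proof.
have N1 : 1 <= (t.+1%:R : R) by rewrite ler1n.
have c20 : 0 < c2 by apply: lt_le_trans ltr01 c2_ge1.
have h : Ssum beta g t.+1 <= t.+1%:R * beta * c2.
  apply: le_trans (Ssum_le beta Gf g t.+1 hg) _.
  rewrite /c2 mulrDr mulr1 -mulrA [beta * _]mulrC divfK ?gt_eqF //.
  by rewrite lerD2r ler_peMl // ltW.
have := h; rewrite -ler_ln ?posrE ?Spos ?mulr_gt0 // ?(lt_le_trans ltr01 N1) //.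
rewrite !lnM ?posrE ?mulr_gt0 // ?(lt_le_trans ltr01 N1) //; lra.
Qed.

Lemma sum2g t (eps : R) : 0 < eps ->
  \sum_(i < t) 2 * gam i * g i <= t%:R * (alpha * eps) + Lam t / (alpha * eps).
Proof.
move=> e0; have ae : 0 < alpha * eps by rewrite mulr_gt0.
have -> : t%:R * (alpha * eps) = \sum_(i < t) (alpha * eps) by rewrite sumr_const card_ord mulr_natl.
rewrite /Lam mulr_suml -big_split /=.
apply: ler_sum => i _.
set p := gam i * g i; set q := alpha * eps.
have -> : 2 * gam i * g i = 2 * p by rewrite /p mulrA.
rewrite -subr_ge0.
have -> : q + gam i ^+ 2 * g i ^+ 2 / q - 2 * p = (p - q) ^+ 2 / q.
  by rewrite /p; field; rewrite gt_eqF.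
by rewrite divr_ge0 ?sqr_ge0 // ltW.
Qed.


Lemma telesc t : \sum_(i < t) (z i - x i) = y 0 - y t.
Proof.
elim: t => [|t IH]; first by rewrite big_ord0 subrr.
rewrite big_ord_recr /= IH rec; rewrite !opprD !opprK !addrA.
by rewrite -!addrA; congr (_ + _); rewrite addrC -!addrA; congr (_ + _); rewrite addrC -addrA addNr addr0.
Qed.

Lemma Hxi i : Hs (x i). Proof. by case: (Px i). Qed.

Lemma dist_chain t :
  dist ((t.+1%:R)^-1 *: \sum_(tau < t.+1) z tau) Hs <= (t.+1%:R)^-1 * (D + d t.+1).
Proof.
set N := (t.+1%:R : R).
have N0 : 0 < N by rewrite ltr0n.
set xb := N^-1 *: \sum_(tau < t.+1) x tau.
have Hxb : Hs xb.
  have := @convex_sum R n Hs (fun _ => 1) x t cH (fun _ => ltr01) Hxi.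
  by rewrite sumr_const card_ord /xb; under eq_bigr do rewrite scale1r.
have h1 : dist (N^-1 *: \sum_(tau < t.+1) z tau) Hs <=
   enorm (N^-1 *: \sum_(tau < t.+1) z tau - xb).
  apply: ge_inf; last by exists xb.
  by exists 0 => r [v _ <-]; apply: enorm_ge0.
apply: le_trans h1 _.
rewrite /xb -scalerBr -sumrB telesc enormZ ger0_norm; last by rewrite invr_ge0 ltW.
rewrite ler_pM2l ?invr_gt0 //.
have -> : y 0 - y t.+1 = (y 0 - xstar) + - (y t.+1 - xstar).
  by rewrite opprB addrA subrK.
by apply: le_trans (enormD _ _ _ _) _; rewrite enormN.
Qed.


Lemma Gam_pos t : 0 < \sum_(i < t.+1) gam i.
Proof.
rewrite big_ord_recr /= ltr_pwDr ?gpos //.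
by apply: sumr_ge0 => i _; apply: ltW; apply: gpos.
Qed.

Lemma f_chain t :
  f ((\sum_(tau < t.+1) gam tau)^-1 *: \sum_(tau < t.+1) (gam tau *: z tau)) - f xstar
  <= (\sum_(i < t.+1) gam i)^-1 * ((D ^+ 2 + Lam t.+1) / 2).
Proof.
have J := @jensen R n f gam z t cf gpos.
set Gm := \sum_(i < t.+1) gam i in J *.
have Gm0 : 0 < Gm := Gam_pos t.
apply: le_trans (lerD J (lexx _)) _.
have -> : Gm^-1 * \sum_(i < t.+1) gam i * f (z i) - f xstar =
          Gm^-1 * \sum_(i < t.+1) gam i * (f (z i) - f xstar).
  under [in RHS]eq_bigr do rewrite mulrBr.
  rewrite sumrB -mulr_suml -/Gm mulrBr mulrA mulVf ?gt_eqF // mul1r //.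
rewrite ler_pM2l ?invr_gt0 //.
have S1 := Sum1 t.+1.
have e : \sum_(i < t.+1) 2 * gam i * (f (z i) - f xstar) =
         2 * \sum_(i < t.+1) gam i * (f (z i) - f xstar).
  by rewrite mulr_sumr; apply: eq_bigr => i _; rewrite mulrA.
rewrite e in S1; have := sqr_ge0 (d t.+1); rewrite /Lam; lra.
Qed.


Lemma Gam_ge t : t.+1%:R * alpha / Num.sqrt (Ssum beta g t.+1) <= \sum_(i < t.+1) gam i.
Proof.
have -> : t.+1%:R * alpha / Num.sqrt (Ssum beta g t.+1) = \sum_(i < t.+1) (alpha / Num.sqrt (Ssum beta g t.+1)).
  by rewrite sumr_const card_ord -[in RHS]mulr_natl mulrA.
apply: ler_sum => i _; rewrite ler_pM2l // lef_pV2 ?posrE ?sqS //.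
by rewrite ler_wsqrtr // Ssum_mono // ltnW.
Qed.

Lemma sqrtS_le t : Num.sqrt (Ssum beta g t) <= Num.sqrt beta + Gf * Num.sqrt t%:R.
Proof.
have h1 := Ssum_le beta Gf g t hg.
rewrite -[X in _ <= X]ger0_norm ?addr_ge0 ?mulr_ge0 ?sqrtr_ge0 ?G0 // -sqrtr_sqr.
apply: ler_wsqrtr; apply: le_trans h1 _.
rewrite sqrrD exprMn (sqr_sqrtr (ltW b0)) (sqr_sqrtr (ler0n _ t)).
rewrite -addrA lerD2l [Gf ^+ 2 * _]mulrC lerDr mulrn_wge0 //.
by rewrite !mulr_ge0 ?sqrtr_ge0 ?G0.
Qed.


Lemma sN t : 1 <= Num.sqrt (t.+1%:R : R).
Proof. by rewrite -[X in X <= _]sqrtr1; apply: ler_wsqrtr; rewrite ler1n. Qed.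

Lemma Lam_fin t : Lam t.+1 <= alpha ^+ 2 * c2 * (ln (t.+1%:R : R) + ln c2).
Proof.
apply: le_trans (Lam_le t.+1) _; apply: ler_wpM2l; last exact: lnS_le.
by rewrite mulr_ge0 ?sqr_ge0 // (le_trans ler01 c2_ge1).
Qed.

Lemma dist_final : exists T0 : nat, forall t : nat, (T0 <= t)%N ->
  dist ((t.+1%:R)^-1 *: \sum_(tau < t.+1) z tau) Hs <=
     1 * (1 + ln (t.+1%:R : R)) ^+ 2 * (2%:R * alpha / Num.sqrt (t.+1%:R) * (1 + Gf / Num.sqrt beta)).
Proof.
have K0 : 0 <= ln c2 by rewrite ln_ge0 // c2_ge1.
have c20 : 0 <= c2 by rewrite (le_trans ler01 c2_ge1).
have sb : 0 < Num.sqrt beta by rewrite sqrtr_gt0.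
have D0 : 0 <= D by apply: enorm_ge0.
set cd := 2 * alpha * (1 + Gf / Num.sqrt beta).
have cd0 : 0 < cd by rewrite /cd !mulr_gt0 // ltr_pwDl // divr_ge0 ?G0 // ltW.
have A0 : 0 <= 2 * D + alpha * (1 + c2 * ln c2).
  apply: addr_ge0; first exact: mulr_ge0.
  by apply: mulr_ge0; [exact: ltW | apply: addr_ge0 => //; exact: mulr_ge0].
have B0 : 0 <= alpha * c2 by apply: mulr_ge0 => //; exact: ltW.
have [T1 HT1] := eventually_log _ _ _ A0 B0 cd0.
exists T1 => t tT; have HA := HT1 t tT.
have s1 := sN t.
set s := Num.sqrt _ in s1 *; set l := ln (t.+1%:R : R) in HA *.
have s0 : 0 < s by apply: lt_le_trans ltr01 s1.
have Ns : (t.+1%:R : R) = s * s by rewrite /s -expr2 sqr_sqrtr // ler0n.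
have hL := Lam_fin t; rewrite -/l in hL.
have si : 0 < s^-1 by rewrite invr_gt0.
have hsum := sum2g t.+1 _ si.
have hd := Sum2 t.+1.
have hdist := dist_chain t.
set r := s^-1 in hsum.
have rs : r * s = 1 by rewrite mulVf ?gt_eqF.
have r0 : 0 < r by rewrite invr_gt0.
have r1 : r <= 1 by rewrite invf_le1.
have -> : 1 * (1 + l) ^+ 2 * (2%:R * alpha / s * (1 + Gf / Num.sqrt beta)) =
          r * (cd * (1 + l) ^+ 2).
  by rewrite /r /cd; field; rewrite !gt_eqF.
apply: le_trans hdist _.
rewrite Ns invfM -/r -mulrA ler_pM2l //.
have e1 : (t.+1%:R) * (alpha * r) = alpha * s by rewrite Ns /r; field; rewrite gt_eqF.
have e2 : Lam t.+1 / (alpha * r) = Lam t.+1 * s / alpha.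
  by rewrite /r; field; rewrite !gt_eqF.
rewrite e1 e2 in hsum.
apply: le_trans HA.
have hL2 : Lam t.+1 / alpha <= alpha * c2 * (l + ln c2).
  rewrite ler_pdivrMr //; apply: le_trans hL _; rewrite le_eqVlt; apply/orP; left; apply/eqP; ring.
have h3 : r * (D + d t.+1) <= r * (2 * D + alpha * s + Lam t.+1 * s / alpha).
  rewrite ler_pM2l //; lra.
apply: le_trans h3 _.
have e3 : r * (2 * D + alpha * s + Lam t.+1 * s / alpha) = r * (2 * D) + alpha + Lam t.+1 / alpha.
  rewrite !mulrDr; congr (_ + _ + _).
    by rewrite mulrCA rs mulr1.
  by rewrite /r; field; rewrite !gt_eqF.
rewrite e3.
have h4 : r * (2 * D) <= 2 * D by rewrite ler_piMl // mulr_ge0.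
have : alpha * c2 * (l + ln c2) = alpha * (c2 * ln c2) + alpha * c2 * l by ring.
lra.
Qed.


Lemma f_final : exists T0 : nat, forall t : nat, (T0 <= t)%N ->
  f ((\sum_(tau < t.+1) gam tau)^-1 *: \sum_(tau < t.+1) (gam tau *: z tau)) - f xstar <=
     1 * (1 + ln (t.+1%:R : R)) ^+ 2 *
     (2%:R * alpha * Gf / Num.sqrt (t.+1%:R) *
         (D ^+ 2 / (4%:R * alpha ^+ 2) + 1 + Gf / Num.sqrt beta)).
Proof.
have K0 : 0 <= ln c2 by rewrite ln_ge0 // c2_ge1.
have c20 : 0 <= c2 by rewrite (le_trans ler01 c2_ge1).
have sb : 0 < Num.sqrt beta by rewrite sqrtr_gt0.
have D0 : 0 <= D by apply: enorm_ge0.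
have [Gp|Gz] : 0 < Gf \/ Gf = 0.
  by case: (ltgtP 0 Gf) => [h|h|h]; [left|have := G0; rewrite leNgt h|right].
- set Q := D ^+ 2 / (4%:R * alpha ^+ 2) + 1 + Gf / Num.sqrt beta.
  have Q0 : 0 < Q.
    have q1 : 0 <= D ^+ 2 / (4%:R * alpha ^+ 2).
      by apply: divr_ge0; [exact: sqr_ge0 | apply: mulr_ge0 => //; exact: sqr_ge0].
    have q2 : 0 <= Gf / Num.sqrt beta by apply: divr_ge0; [exact: G0 | exact: ltW].
    rewrite /Q; lra.
  set cf' := 2 * alpha * Gf * Q.
  have cf0 : 0 < cf' by rewrite /cf' !mulr_gt0.
  set W := (Num.sqrt beta + Gf) / (2 * alpha).
  have W0 : 0 <= W by rewrite /W divr_ge0 ?addr_ge0 ?mulr_ge0 ?G0 // ltW.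
  have A0 : 0 <= (D ^+ 2 + alpha ^+ 2 * c2 * ln c2) * W.
    apply: mulr_ge0 => //; apply: addr_ge0; first exact: sqr_ge0.
    by apply: mulr_ge0 => //; apply: mulr_ge0 => //; exact: sqr_ge0.
  have B0 : 0 <= alpha ^+ 2 * c2 * W.
    by apply: mulr_ge0 => //; apply: mulr_ge0 => //; exact: sqr_ge0.
  have [T HT] := eventually_log _ _ _ A0 B0 cf0.
  exists T => t tT; have HA := HT t tT.
  have s1 := sN t.
  set s := Num.sqrt _ in s1 *; set l := ln (t.+1%:R : R) in HA *.
  have s0 : 0 < s by apply: lt_le_trans ltr01 s1.
  have Ns : (t.+1%:R : R) = s * s by rewrite /s -expr2 sqr_sqrtr // ler0n.
  have hL := Lam_fin t; rewrite -/l in hL.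
  set r := s^-1.
  have rs : r * s = 1 by rewrite mulVf ?gt_eqF.
  have r0 : 0 < r by rewrite invr_gt0.
  have r1 : r <= 1 by rewrite invf_le1.
  have -> : 1 * (1 + l) ^+ 2 * (2%:R * alpha * Gf / s * Q) = r * (cf' * (1 + l) ^+ 2).
    by rewrite /r /cf'; field; rewrite !gt_eqF.
  apply: le_trans (f_chain t) _.
  set Gm := \sum_(i < t.+1) gam i.
  have Gm0 : 0 < Gm := Gam_pos t.
  have SS := sqS t.+1.
  have h2 : Gm^-1 <= Num.sqrt (Ssum beta g t.+1) / (t.+1%:R * alpha).
    rewrite -invf_div lef_pV2 ?posrE ?divr_gt0 ?mulr_gt0 ?ltr0n //.
    exact: Gam_ge.
  have h3 : Num.sqrt (Ssum beta g t.+1) <= Num.sqrt beta + Gf * s := sqrtS_le t.+1.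
  have X0 : 0 <= (D ^+ 2 + Lam t.+1) / 2 by rewrite divr_ge0 // addr_ge0 ?sqr_ge0 ?Lam_ge0.
  apply: le_trans (ler_wpM2r X0 h2) _.
  have h4 : Num.sqrt (Ssum beta g t.+1) / (t.+1%:R * alpha) <= r * (Num.sqrt beta + Gf) / alpha.
    rewrite Ns.
    have -> : r * (Num.sqrt beta + Gf) / alpha = (Num.sqrt beta * s + Gf * s) / (s * s * alpha).
      by rewrite /r; field; rewrite !gt_eqF.
    rewrite ler_pM2r ?invr_gt0 ?mulr_gt0 //.
    apply: le_trans h3 _; rewrite lerD2r ler_peMr //; exact: ltW.
  apply: le_trans (ler_wpM2r X0 h4) _.
  apply: le_trans _ (ler_wpM2l (ltW r0) HA).
  have -> : r * ((D ^+ 2 + alpha ^+ 2 * c2 * ln c2) * W + alpha ^+ 2 * c2 * W * l) =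
            r * (Num.sqrt beta + Gf) / alpha * ((D ^+ 2 + alpha ^+ 2 * c2 * (l + ln c2)) / 2).
    by rewrite /W; field; rewrite !gt_eqF.
  apply: ler_wpM2l; first by rewrite divr_ge0 ?mulr_ge0 ?addr_ge0 ?G0 // ?ltW.
  by rewrite ler_pM2r // lerD2l.
- exists 0%N => t _.
  rewrite Gz mulr0 mul0r mul0r mulr0 subr_le0.
  have u0 i : u i = 0.
    apply: dotvv0; rewrite -enorm2.
    have -> : enorm (u i) = 0 by apply/le_anti; rewrite enorm_ge0 -Gz ub.
    by rewrite expr0n.
  have fz i : f (z i) <= f xstar.
    by have := sg i xstar; rewrite u0 dotv0l addr0.
  apply: le_trans (@jensen R n f gam z t cf gpos) _.
  have Gm0 := Gam_pos t.
  rewrite -ler_pdivlMl ?invr_gt0 // invrK mulr_suml.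
  by apply: ler_sum => i _; rewrite ler_pM2l ?gpos.
Qed.


Lemma final_all : exists T0 : nat, forall t : nat, (T0 <= t)%N ->
  f ((\sum_(tau < t.+1) gam tau)^-1 *: \sum_(tau < t.+1) (gam tau *: z tau)) - f xstar <=
     1 * (1 + ln (t.+1%:R : R)) ^+ 2 *
     (2%:R * alpha * Gf / Num.sqrt (t.+1%:R) *
         (D ^+ 2 / (4%:R * alpha ^+ 2) + 1 + Gf / Num.sqrt beta))
  /\
  dist ((t.+1%:R)^-1 *: \sum_(tau < t.+1) z tau) Hs <=
     1 * (1 + ln (t.+1%:R : R)) ^+ 2 * (2%:R * alpha / Num.sqrt (t.+1%:R) * (1 + Gf / Num.sqrt beta)).
Proof.
have [T1 H1] := f_final; have [T2 H2] := dist_final.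
exists (maxn T1 T2) => t tT; split; [apply: H1 | apply: H2]; apply: leq_trans tT; [exact: leq_maxl | exact: leq_maxr].


Qed.

End Main.


Theorem theorem3 (R : realType) :
  exists C : R, 0 < C /\ exists k : nat,
  forall (n : nat) (f : 'rV[R]_n -> R) (Gs Hs : set 'rV[R]_n)
         (xstar : 'rV[R]_n) (alpha beta Gf : R)
         (y z u x : nat -> 'rV[R]_n),
    convex_fun f ->
    closed Gs -> convex_set Gs ->
    closed Hs -> convex_set Hs ->
    (* x_star solves min f over G ∩ H *)
    Gs xstar -> Hs xstar ->
    (forall w, Gs w -> Hs w -> f xstar <= f w) ->
    0 < alpha -> 0 < beta ->
    (* the iteration, started at y 0 *)
    let gamma := fun t : nat =>
      alpha / Num.sqrt (beta + \sum_(tau < t) enorm (u tau) ^+ 2) in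
    (forall t, is_proj Gs (y t) (z t)) ->
    (forall t, subgrad f (z t) (u t)) ->
    (forall t, is_proj Hs (2%:R *: z t - y t - gamma t *: u t) (x t)) ->
    (forall t, y t.+1 = y t - z t + x t) ->
    (* bounded subgradients *)
    (forall t, enorm (u t) <= Gf) ->
    let D := enorm (y 0%N - xstar) in
    let zbar := fun t : nat => (t.+1%:R)^-1 *: \sum_(tau < t.+1) z tau in
    let ztilde := fun t : nat =>
      (\sum_(tau < t.+1) gamma tau)^-1 *: \sum_(tau < t.+1) (gamma tau *: z tau) in
    exists T0 : nat, forall t : nat, (T0 <= t)%N ->
      f (ztilde t) - f xstar <=
        C * (1 + ln (t.+1%:R)) ^+ k *
        (2%:R * alpha * Gf / Num.sqrt (t.+1%:R) *
         (D ^+ 2 / (4%:R * alpha ^+ 2) + 1 + Gf / Num.sqrt beta))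
      /\
      dist (zbar t) Hs <=
        C * (1 + ln (t.+1%:R)) ^+ k *
        (2%:R * alpha / Num.sqrt (t.+1%:R) * (1 + Gf / Num.sqrt beta)).

Proof.
exists 1; split; first exact: ltr01.
exists 2%N.
move=> n f Gs Hs xstar alpha beta Gf y z u x cf clG cG clH cH Gx Hx opt a0 b0
  gamma Pz sg Px rec ub D zbar ztilde.
exact: (@final_all R n f Gs Hs xstar alpha beta Gf y z u x cf cG cH Gx Hx a0 b0 Pz sg Px rec ub).
Qed.
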